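(* Let $\Gamma\subset\mathbb{O}$ be countable. Then there exists a countable totally ordered subset $\hat\Gamma\subset\mathbb{O}$ with $\sup(\hat\Gamma)=\sup(\Gamma)$ in $\overline{\mathbb{O}}$. Moreover, if $\Gamma\subset\mathbb{B}$ (respectively $\Gamma\subset\mathbb{L}$), then $\hat\Gamma$ can be taken with $\hat\Gamma\subset\mathbb{B}$ (respectively $\hat\Gamma\subset\mathbb{L}$).
   Context: Let $\mathcal{O}$ be the set of non-decreasing sequences $a:\mathbb{N}\to[0,\infty)$, $a\approx b$ iff $c_1a(n)\le b(n)\le c_2a(n)$ for all $n$ for some constants $0<c_1\le c_2$, $\mathbb{O}=\mathcal{O}/\!\approx$ with classes $[a(n)]$, ordered by $[a(n)]\le[b(n)]$ iff $a(n)\le Cb(n)$ for all $n$ for some $C>0$; $\overline{\mathbb{O}}$ is its Dedekind–MacNeille completion. $\mathbb{B}$ is the set of classes with $a(n+1)\le Ca(n)$ for all $n$ for some $C>0$; $\mathbb{L}$ is the set of classes with $[a(mn)]=[a(n)]$ for some integer $m\ge2$. *)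

(* Defs.v *)
From Stdlib Require Import Reals.
Open Scope R_scope.

Definition isO (a : nat -> R) : Prop :=
  (forall n, 0 <= a n) /\ (forall n, a n <= a (S n)).

Definition leO (a b : nat -> R) : Prop :=
  exists C, 0 < C /\ forall n, a n <= C * b n.

Definition eqvO (a b : nat -> R) : Prop :=
  exists c1 c2, 0 < c1 /\ c1 <= c2 /\ forall n, c1 * a n <= b n /\ b n <= c2 * a n.

(* A subset of 𝕆 is given by a set of representatives S (its classes are {[a] | a ∈ S}). *)
Definition seqset := (nat -> R) -> Prop.

Definition countable_set (S : seqset) : Prop :=
  exists f : nat -> option (nat -> R), forall a, S a -> exists n, f n = Some a.

Definition totally_ordered (S : seqset) : Prop :=
  forall a b, S a -> S b -> leO a b \/ leO b a.

Definition upper_bound (S : seqset) (b : nat -> R) : Prop :=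
  isO b /\ forall a, S a -> leO a b.

(* sup S in the Dedekind–MacNeille completion of 𝕆, represented (as usual)
   by the cut S^{ul}: the set of lower bounds (in 𝕆) of the upper bounds of S. *)
Definition DMsup (S : seqset) (a : nat -> R) : Prop :=
  isO a /\ forall b, upper_bound S b -> leO a b.

Definition inB (a : nat -> R) : Prop :=
  exists C, 0 < C /\ forall n, a (S n) <= C * a n.

Definition inL (a : nat -> R) : Prop :=
  exists m : nat, (2 <= m)%nat /\ eqvO (fun n => a (m * n)%nat) a.

Definition good_hat (G Gh : seqset) : Prop :=
  countable_set Gh /\ (forall a, Gh a -> isO a) /\ totally_ordered Gh /\
  (forall a, DMsup Gh a <-> DMsup G a).

(* Main.v *)
Require Import Defs.
From Stdlib Require Import Reals Lra Lia ClassicalEpsilon.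
Open Scope R_scope.

Definition L2 (a : nat -> R) : Prop := exists c, 0 < c /\ forall n, a (2 * n)%nat <= c * a n.

Lemma mono_add (a : nat -> R) : isO a -> forall n k, a n <= a (n + k)%nat.
Proof.
  intros [_ H] n k; induction k. rewrite Nat.add_0_r; lra.
  rewrite Nat.add_succ_r; specialize (H (n+k)%nat); lra.
Qed.

Lemma mono_le (a : nat -> R) : isO a -> forall n m, (n <= m)%nat -> a n <= a m.
Proof. intros Ha n m H. replace m with (n + (m - n))%nat by lia. apply mono_add; auto. Qed.

Lemma L_L2 a : isO a -> inL a -> L2 a.
Proof.
  intros Ha [m [Hm [c1 [c2 [H1 [H2 H3]]]]]].
  exists (/ c1). split. apply Rinv_0_lt_compat; lra.
  intro n. destruct (H3 n) as [A _].
  assert (a (2*n)%nat <= a (m*n)%nat) by (apply mono_le; auto; nia).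
  apply Rmult_le_reg_l with c1; auto. rewrite <- Rmult_assoc, Rinv_r by lra.
  assert (0 <= a (2*n)%nat) by (apply Ha). nra.
Qed.

Lemma L2_L a : isO a -> L2 a -> inL a.
Proof.
  intros Ha [c [Hc H]]. exists 2%nat. split. lia.
  exists (/ c), (Rmax 1 (/ c)). assert (0 < / c) by (apply Rinv_0_lt_compat; lra).
  split; auto. split. apply Rmax_r. intro n. split.
  - apply Rmult_le_reg_l with c; auto. rewrite <- Rmult_assoc, Rinv_r by lra. specialize (H n); lra.
  - assert (a n <= a (2*n)%nat) by (apply mono_le; auto; lia).
    assert (0 <= a (2*n)%nat) by apply Ha.
    assert (1 <= Rmax 1 (/ c)) by apply Rmax_l. nra.
Qed.

Definition mx (x y : nat -> R) := fun n => Rmax (x n) (y n).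

Lemma mx_O x y : isO x -> isO y -> isO (mx x y).
Proof.
  intros [Hx1 Hx2] [Hy1 Hy2]; split; intro n; unfold mx.
  - specialize (Hx1 n); eapply Rle_trans; [eauto|apply Rmax_l].
  - apply Rmax_lub. eapply Rle_trans; [apply Hx2|apply Rmax_l].
    eapply Rle_trans; [apply Hy2|apply Rmax_r].
Qed.

Lemma mx_B x y : isO x -> isO y -> inB x -> inB y -> inB (mx x y).
Proof.
  intros [Hx1 _] [Hy1 _] [cx [Hcx Hx]] [cy [Hcy Hy]]. exists (cx+cy). split. lra.
  intro n; unfold mx. specialize (Hx n); specialize (Hy n). specialize (Hx1 n); specialize (Hy1 n).
  pose proof (Rmax_l (x n) (y n)); pose proof (Rmax_r (x n) (y n)).
  apply Rmax_lub; nra.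
Qed.

Lemma mx_L2 x y : isO x -> isO y -> L2 x -> L2 y -> L2 (mx x y).
Proof.
  intros [Hx1 _] [Hy1 _] [cx [Hcx Hx]] [cy [Hcy Hy]]. exists (cx+cy). split. lra.
  intro n; unfold mx. specialize (Hx n); specialize (Hy n). specialize (Hx1 n); specialize (Hy1 n).
  pose proof (Rmax_l (x n) (y n)); pose proof (Rmax_r (x n) (y n)).
  apply Rmax_lub; nra.
Qed.

Lemma mx_le x y b : isO b -> leO x b -> leO y b -> leO (mx x y) b.
Proof.
  intros [Hb _] [cx [Hcx Hx]] [cy [Hcy Hy]]. exists (cx+cy). split. lra.
  intro n; unfold mx. specialize (Hx n); specialize (Hy n); specialize (Hb n).
  apply Rmax_lub; nra.
Qed.

Definition zero : nat -> R := fun _ => 0.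

Lemma zero_O : isO zero. Proof. split; intro; unfold zero; lra. Qed.
Lemma zero_B : inB zero. Proof. exists 1; split; [lra|intro; unfold zero; lra]. Qed.
Lemma zero_L2 : L2 zero. Proof. exists 1; split; [lra|intro; unfold zero; lra]. Qed.

Lemma pw_le x y : (forall n, x n <= y n) -> leO x y.
Proof. intro H; exists 1; split; [lra|intro n; specialize (H n); lra]. Qed.

Section Main.
Variable G : seqset.
Variable f : nat -> option (nat -> R).
Hypothesis hf : forall a, G a -> exists n, f n = Some a.
Hypothesis hO : forall a, G a -> isO a.

Definition g (i : nat) : nat -> R :=
  match f i with
  | Some a => if excluded_middle_informative (G a) then a else zero
  | None => zero
  end.

Lemma g_cases i : G (g i) \/ g i = zero.
Proof. unfold g. destruct (f i); auto. destruct excluded_middle_informative; auto. Qed.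

Fixpoint h (k : nat) : nat -> R :=
  match k with O => g O | S k => mx (h k) (g (S k)) end.

Definition Gh : seqset := fun a => exists k, a = h k.

Lemma g_O i : isO (g i).
Proof. destruct (g_cases i) as [H|H]. auto. rewrite H; apply zero_O. Qed.

Lemma h_O k : isO (h k).
Proof. induction k; simpl. apply g_O. apply mx_O; auto; apply g_O. Qed.

Lemma h_mono k k' : (k <= k')%nat -> forall n, h k n <= h k' n.
Proof.
  induction 1; intro n. lra. simpl; unfold mx. eapply Rle_trans. apply IHle. apply Rmax_l.
Qed.

Lemma g_h i n : g i n <= h i n.
Proof. destruct i; simpl. lra. unfold mx; apply Rmax_r. Qed.

Lemma h_B : (forall a, G a -> inB a) -> forall k, inB (h k).
Proof.
  intro HB. assert (forall i, inB (g i)).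
  { intro i; destruct (g_cases i) as [H|H]. auto. rewrite H; apply zero_B. }
  induction k; simpl. auto. apply mx_B; auto. apply h_O. apply g_O.
Qed.

Lemma h_L : (forall a, G a -> inL a) -> forall k, inL (h k).
Proof.
  intro HL. assert (forall i, L2 (g i)).
  { intro i; destruct (g_cases i) as [H|H]. apply L_L2; auto. rewrite H; apply zero_L2. }
  intro k. apply L2_L. apply h_O.
  induction k; simpl. auto. apply mx_L2; auto. apply h_O. apply g_O.
Qed.

Lemma ub_equiv b : upper_bound Gh b <-> upper_bound G b.
Proof.
  split; intros [Hb H]; split; auto.
  - intros a Ga. destruct (hf a Ga) as [n Hn].
    assert (g n = a). { unfold g; rewrite Hn. destruct excluded_middle_informative; tauto. }
    destruct (H (h n) (ex_intro _ n eq_refl)) as [C [HC HC']].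
    exists C; split; auto; intro m. subst a. eapply Rle_trans. apply g_h. auto.
  - assert (Hg : forall i, leO (g i) b).
    { intro i; destruct (g_cases i) as [E|E]. auto. rewrite E.
      exists 1; split. lra. intro n; unfold zero; destruct Hb as [Hb _]; specialize (Hb n); lra. }
    intros a [k ->]. induction k; simpl. auto. apply mx_le; auto.
Qed.

Lemma good : good_hat G Gh.
Proof.
  split; [|split; [|split]].
  - exists (fun k => Some (h k)). intros a [k ->]. exists k; auto.
  - intros a [k ->]; apply h_O.
  - intros a b [k ->] [k' ->]. destruct (Nat.le_ge_cases k k').
    left; apply pw_le, h_mono; auto. right; apply pw_le, h_mono; auto.
  - intro a; unfold DMsup; split; intros [Ha H]; split; auto; intros b Hb; apply H; apply ub_equiv; auto.
Qed.
End Main.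

Theorem lemma3p1 (G : seqset) (hc : countable_set G) (hO : forall a, G a -> isO a) :
  (exists Gh : seqset, good_hat G Gh) /\
  ((forall a, G a -> inB a) -> exists Gh : seqset, good_hat G Gh /\ (forall a, Gh a -> inB a)) /\
  ((forall a, G a -> inL a) -> exists Gh : seqset, good_hat G Gh /\ (forall a, Gh a -> inL a)).
Proof.
  destruct hc as [f hf].
  split; [|split].
  - exists (Gh G f). apply good; auto.
  - intro HB. exists (Gh G f). split. apply good; auto. intros a [k ->]. apply h_B; auto.
  - intro HL. exists (Gh G f). split. apply good; auto. intros a [k ->]. apply h_L; auto.
Qed.
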